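(* Let $d\geq 2$, let $t\geq 2$ be an integer and $0\leq\epsilon<1$. Let $U$ be a $d\times d$ unitary matrix distributed according to an $\epsilon$-approximate unitary $t$-design. Then for any unit vectors $|\alpha\rangle,|\beta\rangle\in\mathbb{C}^d$ and any constant $0\leq\gamma\leq1-\epsilon$, $$\Pr_U\left[|\langle\alpha|U|\beta\rangle|^2>\frac{\gamma}{d}\right]\geq\frac{(1-\epsilon-\gamma)^2}{2(1+\epsilon)}.$$
   Context: A distribution $\{p_i,U_i\}$ over $d\times d$ unitaries is an $\epsilon$-approximate unitary $t$-design if for every polynomial $f$ homogeneous of degree $t$ in the entries of $U$ and homogeneous of degree $t$ in the entries of $U^*$, $(1-\epsilon)\int_{\mathrm{U}(d)}f(U)\,dU\leq\sum_ip_if(U_i)\leq(1+\epsilon)\int_{\mathrm{U}(d)}f(U)\,dU$, with $dU$ the Haar measure on $\mathrm{U}(d)$. *)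

(* Defs.v *)
From HB Require Import structures.
From mathcomp Require Import all_boot all_order all_algebra.
From mathcomp Require Import reals.
From mathcomp Require Export complex.
Set Implicit Arguments. Unset Strict Implicit. Unset Printing Implicit Defensive.
Import Order.TTheory GRing.Theory Num.Theory.
Local Open Scope ring_scope.
Local Open Scope complex_scope.

Section Unitary.
Variables (R : realType) (d : nat).
Local Notation C := R[i].

Definition adjmx m n (A : 'M[C]_(m, n)) : 'M[C]_(n, m) := (map_mx Num.conj A)^T.

Definition unitary (U : 'M[C]_d) : Prop := U *m adjmx U = 1%:M.

Definition unit_vec (v : 'cV[C]_d) : Prop := (adjmx v *m v) 0 0 = 1.

Definition braket (a : 'cV[C]_d) (U : 'M[C]_d) (b : 'cV[C]_d) : C :=
  (adjmx a *m U *m b) 0 0.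

Definition monomial (s s' : seq ('I_d * 'I_d)) (U : 'M[C]_d) : C :=
  \prod_(ij <- s) U ij.1 ij.2 * \prod_(ij <- s') (U ij.1 ij.2)^*.

Definition poly_fun (f : 'M[C]_d -> C) : Prop :=
  exists s : seq (C * seq ('I_d * 'I_d) * seq ('I_d * 'I_d)),
    forall U, unitary U -> f U = \sum_(m <- s) m.1.1 * monomial m.1.2 m.2 U.

Definition bihom_poly_fun (t : nat) (f : 'M[C]_d -> C) : Prop :=
  exists c : {ffun ({ffun 'I_t -> 'I_d * 'I_d} * {ffun 'I_t -> 'I_d * 'I_d}) -> C},
    forall U, unitary U ->
      f U = \sum_(x : {ffun 'I_t -> 'I_d * 'I_d} * {ffun 'I_t -> 'I_d * 'I_d})
              c x * (\prod_(k < t) U (x.1 k).1 (x.1 k).2)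
                  * (\prod_(k < t) (U (x.2 k).1 (x.2 k).2)^*).

(* The Haar integral  f |-> \int_{U(d)} f(U) dU  on polynomial functions,
   characterised as the normalised, positive, linear, left- and
   right-invariant functional (Haar measure via Riesz; unique). *)
Definition is_haar_integral (I : ('M[C]_d -> C) -> C) : Prop :=
  [/\ (forall f g, poly_fun f -> poly_fun g ->
          I (fun U => f U + g U) = I f + I g),
      (forall (c : C) f, poly_fun f -> I (fun U => c * f U) = c * I f),
      I (fun _ => 1) = 1,
      (forall f, poly_fun f -> (forall U, unitary U -> 0 <= f U) -> 0 <= I f)
    & (forall V f, unitary V -> poly_fun f -> I (fun U => f (V *m U)) = I f) /\
      (forall V f, unitary V -> poly_fun f -> I (fun U => f (U *m V)) = I f)].

Definition unitary_distr (I : finType) (p : I -> R) (Us : I -> 'M[C]_d) : Prop :=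
  [/\ forall i, 0 <= p i, \sum_i p i = 1 & forall i, unitary (Us i)].

Definition approx_design (haar : ('M[C]_d -> C) -> C) (eps : R) (t : nat)
    (I : finType) (p : I -> R) (Us : I -> 'M[C]_d) : Prop :=
  unitary_distr p Us /\
  forall f, bihom_poly_fun t f -> (forall U, unitary U -> 0 <= f U) ->
    (1 - eps)%:C * haar f <= \sum_i (p i)%:C * f (Us i) <= (1 + eps)%:C * haar f.

End Unitary.

(* Main.v *)
Require Import Defs.
From HB Require Import structures.
From mathcomp Require Import all_boot all_order all_algebra.
From mathcomp Require Import reals complex.
From mathcomp Require Import ring lra.
From Stdlib Require Import FunctionalExtensionality.
Import Order.TTheory GRing.Theory Num.Theory.
Local Open Scope ring_scope.
Local Open Scope complex_scope.
Set Implicit Arguments. Unset Strict Implicit. Unset Printing Implicit Defensive.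
Local Open Scope ring_scope.

Section PF.
Variables (R : realType) (d : nat).
Local Notation C := R[i].
Local Notation M := 'M[C]_d.

Lemma conjcE (x : C) : conjc x = x^*. Proof. by []. Qed.

Lemma pf_ext (f g : M -> C) :
  (forall U, unitary U -> f U = g U) -> poly_fun f -> poly_fun g.
Proof. by move=> e [s hs]; exists s => U hU; rewrite -e // hs. Qed.

Lemma pf_const (c : C) : poly_fun (fun _ : M => c).
Proof. exists [:: (c, [::], [::])] => U _; by rewrite big_seq1 /monomial !big_nil !mulr1. Qed.

Lemma pf_entry i j : poly_fun (fun U : M => U i j).
Proof.
exists [:: (1, [:: (i, j)], [::])] => U _.
by rewrite big_seq1 /monomial big_seq1 big_nil /= mul1r mulr1.
Qed.

Lemma pf_centry i j : poly_fun (fun U : M => (U i j)^*).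
Proof.
exists [:: (1, [::], [:: (i, j)])] => U _.
by rewrite big_seq1 /monomial big_seq1 big_nil /= mul1r mul1r.
Qed.

Lemma pf_add f g : poly_fun f -> poly_fun g -> poly_fun (fun U : M => f U + g U).
Proof.
move=> [s1 h1] [s2 h2]; exists (s1 ++ s2) => U hU.
by rewrite big_cat h1 // h2.
Qed.

Lemma monomial_cat s1 s1' s2 s2' (U : M) :
  monomial (s1 ++ s2) (s1' ++ s2') U = monomial s1 s1' U * monomial s2 s2' U.
Proof. rewrite /monomial !big_cat /=; ring. Qed.

Lemma pf_mul f g : poly_fun f -> poly_fun g -> poly_fun (fun U : M => f U * g U).
Proof.
move=> [s1 h1] [s2 h2].
exists [seq (m1.1.1 * m2.1.1, m1.1.2 ++ m2.1.2, m1.2 ++ m2.2) | m1 <- s1, m2 <- s2].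
move=> U hU; rewrite h1 // h2 // big_allpairs_dep /= mulr_suml.
apply: eq_bigr => m1 _; rewrite mulr_sumr; apply: eq_bigr => m2 _.
rewrite monomial_cat; ring.
Qed.

Lemma ccK (x : C) : (conjc x)^* = x. Proof. exact: conjCK. Qed.
Lemma conj_prod (T : Type) (r : seq T) (F : T -> C) :
  (\prod_(x <- r) F x)^* = \prod_(x <- r) (F x)^*.
Proof. elim: r => [|x r IH]; first by rewrite !big_nil conjC1.
by rewrite !big_cons rmorphM /= IH. Qed.
Lemma conj_sum (T : Type) (r : seq T) (P : pred T) (F : T -> C) :
  (\sum_(x <- r | P x) F x)^* = \sum_(x <- r | P x) (F x)^*.
Proof. elim: r => [|x r IH]; first by rewrite !big_nil conjC0.
by rewrite !big_cons; case: (P x); rewrite ?rmorphD /= IH. Qed.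
Lemma monoC (U : M) s s' : (monomial s s' U)^* = monomial s' s U.
Proof.
rewrite /monomial rmorphM /= !conj_prod.
under [in X in _ * X]eq_bigr do rewrite ccK.
by rewrite mulrC.
Qed.

Lemma pf_conj f : poly_fun f -> poly_fun (fun U : M => (f U)^*).
Proof.
move=> [s h]; exists [seq (m.1.1^*, m.2, m.1.2) | m <- s] => U hU.
rewrite h // big_map conj_sum; apply: eq_bigr => m _.
by rewrite rmorphM /= monoC.
Qed.

Lemma pf_sum (T : Type) (r : seq T) (P : pred T) (F : T -> M -> C) :
  (forall x, poly_fun (F x)) -> poly_fun (fun U => \sum_(x <- r | P x) F x U).
Proof.
move=> hF; elim: r => [|x r IH].
  by apply: (pf_ext _ (pf_const 0)) => U _; rewrite big_nil.
case Px: (P x).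
  by apply: (pf_ext _ (pf_add (hF x) IH)) => U _; rewrite big_cons Px.
by apply: (pf_ext _ IH) => U _; rewrite big_cons Px.
Qed.

Lemma pf_exp f n : poly_fun f -> poly_fun (fun U : M => f U ^+ n).
Proof.
move=> hf; elim: n => [|n IH].
  by apply: (pf_ext _ (pf_const 1)) => U _; rewrite expr0.
by apply: (pf_ext _ (pf_mul hf IH)) => U _; rewrite exprS.
Qed.

Lemma pf_scale c f : poly_fun f -> poly_fun (fun U : M => c * f U).
Proof. exact: (pf_mul (pf_const c)). Qed.

End PF.


Section HX.
Variables (R : realType) (d : nat).
Local Notation C := R[i].
Local Notation M := 'M[C]_d.
Variable haar : (M -> C) -> C.
Hypothesis Hh : is_haar_integral haar.

Lemma hx_add f g : poly_fun f -> poly_fun g -> haar (fun U => f U + g U) = haar f + haar g.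
Proof. by case: Hh => h _ _ _ _; apply: h. Qed.

Lemma hx_scale c f : poly_fun f -> haar (fun U => c * f U) = c * haar f.
Proof. by case: Hh => _ h _ _ _; apply: h. Qed.

Lemma hx_one : haar (fun _ => 1) = 1.
Proof. by case: Hh. Qed.

Lemma hx_left V f : unitary V -> poly_fun f -> haar (fun U => f (V *m U)) = haar f.
Proof. by case: Hh => _ _ _ _ [h _]; apply: h. Qed.

Lemma hx_ext f g : poly_fun f -> poly_fun g -> (forall U, unitary U -> f U = g U) ->
  haar f = haar g.
Proof.
move=> pf pg e.
pose h := fun U => f U + (-1) * g U.
have ph : poly_fun h by apply: pf_add => //; apply: pf_scale.
have h0 : haar h = 0.
  case: Hh => _ hs _ hpos _.
  have p1 : 0 <= haar h by apply: hpos => // U hU; rewrite /h e // !mulN1r subrr ?oppr0.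
  have p2 : 0 <= haar (fun U => (-1) * h U).
    by apply: hpos; [apply: pf_scale|move=> U hU; rewrite /h e // !mulN1r subrr ?oppr0].
  rewrite hs // mulN1r oppr_ge0 in p2.
  by apply/le_anti; rewrite p1 p2.
have -> : f = (fun U => g U + h U) by apply: functional_extensionality => U; rewrite /h; ring.
by rewrite hx_add // h0 addr0.
Qed.

Lemma hx_sum (T : Type) (r : seq T) (F : T -> M -> C) :
  (forall x, poly_fun (F x)) ->
  haar (fun U => \sum_(x <- r) F x U) = \sum_(x <- r) haar (F x).
Proof.
move=> hF; elim: r => [|x r IH].
  rewrite big_nil; have -> : (fun U : M => \sum_(x <- [::]) F x U) = (fun U => 0 * 1).
    by apply: functional_extensionality => U; rewrite big_nil mul0r.
  by rewrite hx_scale ?mul0r //; apply: pf_const.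
have -> : (fun U => \sum_(y <- x :: r) F y U) = (fun U => F x U + \sum_(y <- r) F y U).
  by apply: functional_extensionality => U; rewrite big_cons.
by rewrite hx_add ?IH ?big_cons //; apply: pf_sum.
Qed.

Lemma hx_phase0 V (lam : C) f : unitary V -> poly_fun f -> lam != 1 ->
  (forall U, f (V *m U) = lam * f U) -> haar f = 0.
Proof.
move=> hV pf hl e.
have : haar f = lam * haar f.
  rewrite -hx_scale // -(hx_left hV pf); congr haar.
  by apply: functional_extensionality => U.
move/eqP; rewrite -subr_eq0 -{1}[haar f]mul1r -mulrBl mulf_eq0 subr_eq0 eq_sym (negbTE hl) /=.
by move/eqP.
Qed.

End HX.

Module Part3.

Section Adj.
Variables (R : realType).
Local Notation C := R[i].

Lemma adjmxE m n (A : 'M[C]_(m, n)) i j : adjmx A i j = (A j i)^*.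
Proof. by rewrite !mxE. Qed.

Lemma adjmx_mul m n p (A : 'M[C]_(m, n)) (B : 'M[C]_(n, p)) :
  adjmx (A *m B) = adjmx B *m adjmx A.
Proof. by rewrite /adjmx map_mxM trmx_mul. Qed.

Lemma adjmxK m n (A : 'M[C]_(m, n)) : adjmx (adjmx A) = A.
Proof. by apply/matrixP => i j; rewrite !adjmxE conjCK. Qed.

Lemma adjmxD m n (A B : 'M[C]_(m, n)) : adjmx (A + B) = adjmx A + adjmx B.
Proof. by apply/matrixP => i j; rewrite !mxE rmorphD. Qed.

Lemma adjmxN m n (A : 'M[C]_(m, n)) : adjmx (- A) = - adjmx A.
Proof. by apply/matrixP => i j; rewrite !mxE rmorphN. Qed.

Lemma adjmxZ m n c (A : 'M[C]_(m, n)) : adjmx (c *: A) = c^* *: adjmx A.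
Proof. by apply/matrixP => i j; rewrite !mxE rmorphM. Qed.

Lemma adjmx1 n : adjmx (1%:M : 'M[C]_n) = 1%:M.
Proof. by apply/matrixP => i j; rewrite !mxE eq_sym; case: (i == j); rewrite ?conjC1 ?conjC0. Qed.

Lemma dotE n (a b : 'cV[C]_n) : (adjmx a *m b) 0 0 = \sum_l (a l 0)^* * b l 0.
Proof. by rewrite mxE; apply: eq_bigr => l _; rewrite adjmxE. Qed.

Lemma unitary_adj n (U : 'M[C]_n) : unitary U -> adjmx U *m U = 1%:M.
Proof. exact: mulmx1C. Qed.

End Adj.

Section Moments.
Variables (R : realType) (d : nat).
Local Notation C := R[i].
Local Notation M := 'M[C]_d.
Variable beta : 'cV[C]_d.

Definition ue (U : M) j := (U *m beta) j 0.
Definition ip (w : 'cV[C]_d) (U : M) := \sum_l (w l 0)^* * ue U l.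
Definition q w U := ip w U * (ip w U)^*.

Lemma pf_ue j : poly_fun (fun U => ue U j).
Proof.
apply: (pf_ext (f := fun U : M => \sum_(m <- index_enum _) U j m * beta m 0)).
  by move=> U _; rewrite /ue mxE.
by apply: pf_sum => m; apply: pf_mul; [apply: pf_entry|apply: pf_const].
Qed.

Lemma pf_ip w : poly_fun (ip w).
Proof. by apply: pf_sum => l; apply: pf_scale; apply: pf_ue. Qed.

Lemma pf_q w : poly_fun (q w).
Proof. by apply: pf_mul; [apply: pf_ip | apply: pf_conj; apply: pf_ip]. Qed.

Lemma pf_qn w n : poly_fun (fun U => q w U ^+ n).
Proof. by apply: pf_exp; apply: pf_q. Qed.

Lemma ipE w U : ip w U = (adjmx w *m U *m beta) 0 0.
Proof. by rewrite -mulmxA dotE. Qed.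

Lemma ip_mulV w V U : ip w (V *m U) = ip (adjmx V *m w) U.
Proof. by rewrite !ipE adjmx_mul adjmxK mulmxA. Qed.

Lemma ip_scale c w U : ip (c *: w) U = c^* * ip w U.
Proof. by rewrite /ip mulr_sumr; apply: eq_bigr => l _; rewrite mxE rmorphM mulrA. Qed.

Lemma ip_delta l U : ip (delta_mx l 0) U = ue U l.
Proof.
rewrite /ip (bigD1 l) //= big1 ?addr0; first by rewrite mxE !eqxx conjC1 mul1r.
by move=> m hm; rewrite mxE (negbTE hm) conjC0 mul0r.
Qed.

Lemma q_scale c w U : c * c^* = 1 -> q (c *: w) U = q w U.
Proof.
move=> hc; rewrite /q ip_scale rmorphM /= conjCK.
by rewrite mulrACA [c^* * c]mulrC hc mul1r.
Qed.

Lemma sum_q_delta U : unitary U -> unit_vec beta ->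
  \sum_l q (delta_mx l 0) U = 1.
Proof.
move=> hU hb.
have e : adjmx (U *m beta) *m (U *m beta) = adjmx beta *m beta.
  by rewrite adjmx_mul -mulmxA (mulmxA (adjmx U)) unitary_adj // mul1mx.
rewrite -hb -e dotE.
by apply: eq_bigr => l _; rewrite /q ip_delta mulrC /ue.
Qed.

End Moments.

End Part3.
Import Part3.


Section HH.
Variables (R : realType) (d : nat).
Local Notation C := R[i].
Local Notation M := 'M[C]_d.
Local Notation V := 'cV[C]_d.

Definition dt (a b : V) := (adjmx a *m b) 0 0.

Lemma dtE a b : dt a b = \sum_l (a l 0)^* * b l 0.
Proof. exact: dotE. Qed.

Lemma dtC a b : dt b a = (dt a b)^*.
Proof.
rewrite !dtE conj_sum; apply: eq_bigr => l _.
by rewrite rmorphM /= conjCK mulrC.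
Qed.

Lemma dtBl a b c : dt (a - b) c = dt a c - dt b c.
Proof.
rewrite !dtE -sumrB; apply: eq_bigr => l _.
by rewrite !mxE rmorphB /= mulrBl.
Qed.

Lemma dtZl k a b : dt (k *: a) b = k^* * dt a b.
Proof.
rewrite !dtE mulr_sumr; apply: eq_bigr => l _.
by rewrite !mxE rmorphM /= mulrA.
Qed.

Lemma dtBr a b c : dt c (a - b) = dt c a - dt c b.
Proof. by rewrite dtC dtBl rmorphB /= -!dtC. Qed.

Lemma dtZr k a b : dt b (k *: a) = k * dt b a.
Proof. by rewrite dtC dtZl rmorphM /= conjCK -dtC. Qed.

Lemma dt_delta i0 b : dt (delta_mx i0 0) b = b i0 0.
Proof.
rewrite dtE (bigD1 i0) //= big1 ?addr0; first by rewrite mxE !eqxx conjC1 mul1r.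
by move=> m hm; rewrite mxE (negbTE hm) conjC0 mul0r.
Qed.

Lemma dt_eq0 v : dt v v = 0 -> v = 0.
Proof.
rewrite dtE => /eqP; rewrite psumr_eq0 => [/allP h|l _]; last first.
  by rewrite mulrC mul_conjC_ge0.
apply/matrixP => i j; rewrite (ord1 j) mxE.
have /h : i \in index_enum 'I_d by rewrite mem_index_enum.
by rewrite /= mulf_eq0 conjC_eq0 orbb => /eqP.
Qed.

Lemma adjmx_dt (a b : V) : adjmx a *m b = (dt a b)%:M.
Proof. exact: mx11_scalar. Qed.

Lemma householder (w : V) (i0 : 'I_d) : unit_vec w ->
  exists (U : M) (phi : C), [/\ unitary U, phi * phi^* = 1 & adjmx U *m w = phi *: delta_mx i0 0].
Proof.
move=> hw; rewrite /unit_vec -/(dt w w) in hw.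
set a := w i0 0.
pose phi : C := if a == 0 then 1 else a / `|a|.
have hphi : phi * phi^* = 1.
  rewrite /phi; case: eqP => [_|/eqP ha]; first by rewrite conjC1 mulr1.
  have na : `|a| != 0 by rewrite normr_eq0.
  rewrite rmorphM /= fmorphV /= conj_normC.
  have -> : a / `|a| * (a^* / `|a|) = (a * a^*) / (`|a| ^+ 2) by field.
  by rewrite -normCK mulfV // expf_neq0.
have hpa : phi^* * a = `|a|.
  rewrite /phi; case: eqP => [->|/eqP ha]; first by rewrite conjC1 mul1r normr0.
  have na : `|a| != 0 by rewrite normr_eq0.
  rewrite rmorphM /= fmorphV /= conj_normC.
  have -> : a^* / `|a| * a = (a * a^*) / `|a| by field.
  by rewrite -normCK expr2 mulfK.
set e := delta_mx i0 0 : V.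
set y := phi *: e.
set v := w - y.
have dyw : dt y w = `|a| by rewrite /y dtZl dt_delta.
have dwy : dt w y = `|a| by rewrite dtC dyw conj_normC.
have dyy : dt y y = 1 by rewrite /y dtZl dtZr dt_delta mxE !eqxx mulr1 mulrC hphi.
have dvw : dt v w = 1 - `|a| by rewrite /v dtBl hw dyw.
have dvv : dt v v = 2 - 2 * `|a|.
  rewrite /v dtBl !dtBr hw dyw dwy dyy; ring.
have [v0|vn0] := eqVneq v 0.
  exists 1%:M, phi; split => //; first by rewrite /unitary adjmx1 mul1mx.
  by rewrite adjmx1 mul1mx; apply/eqP; rewrite -subr_eq0 -/v v0.
set nn := dt v v.
have nn0 : nn != 0 by apply/eqP => /dt_eq0 h; rewrite h eqxx in vn0.
have nnC : nn^* = nn by rewrite /nn -dtC.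
set c := 2 / nn.
have cC : c^* = c by rewrite /c fmorph_div /= nnC conjC_nat.
have cnn : c * nn = 2 by rewrite /c mulfVK.
set P := v *m adjmx v.
have PP : P *m P = nn *: P.
  by rewrite /P mulmxA -(mulmxA v) adjmx_dt mul_mx_scalar scalemxAl.
have Padj : adjmx P = P by rewrite /P adjmx_mul adjmxK.
exists (1%:M - c *: P), phi; split => //.
  rewrite /unitary adjmxD adjmxN adjmxZ adjmx1 Padj cC.
  rewrite mulmxBl mul1mx mulmxBr mulmx1 -scalemxAl -scalemxAr scalerA PP scalerA.
  have -> : c * c * nn = c + c by rewrite -mulrA cnn; ring.
  by rewrite scalerDl opprB addrK subrK.
rewrite adjmxD adjmxN adjmxZ adjmx1 Padj cC mulmxBl mul1mx -scalemxAl /P -mulmxA.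
rewrite adjmx_dt mul_mx_scalar scalerA dvw.
have -> : c * (1 - `|a|) = 1.
  apply: (mulfI (_ : (2 : C) != 0)); first by rewrite pnatr_eq0.
  rewrite mulr1; transitivity (c * nn); last exact: cnn.
  by rewrite /nn dvv; ring.
by rewrite scale1r /v opprB addrC subrK.
Qed.

End HH.


Section Mom.
Variables (R : realType) (d : nat).
Local Notation C := R[i].
Local Notation M := 'M[C]_d.
Local Notation V := 'cV[C]_d.
Variable haar : (M -> C) -> C.
Hypothesis Hh : is_haar_integral haar.
Variable beta : V.
Hypothesis hb : unit_vec beta.
Variable i0 : 'I_d.

Local Notation q := (q beta).
Local Notation ue := (ue beta).
Local Notation ip := (ip beta).
Definition e (l : 'I_d) : V := delta_mx l 0.

Lemma unit_e l : unit_vec (e l).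
Proof. by rewrite /unit_vec -/(dt _ _) dt_delta mxE !eqxx. Qed.

Lemma inv_qn w n : unit_vec w ->
  haar (fun U => q w U ^+ n) = haar (fun U => q (e i0) U ^+ n).
Proof.
move=> hw; have [U [phi [hU hphi hUw]]] := householder i0 hw.
rewrite -(hx_left Hh hU (pf_qn beta w n)); congr haar.
apply: functional_extensionality => X.
by rewrite /Part3.q !ip_mulV hUw -/(Part3.q _ _ _) q_scale.
Qed.

Lemma inv_q1 w : unit_vec w -> haar (q w) = haar (q (e i0)).
Proof.
move=> hw; have := inv_qn 1 hw.
have E : forall w, (fun U => q w U ^+ 1) = q w.
  by move=> w'; apply: functional_extensionality => U; rewrite expr1.
by rewrite !E.
Qed.

Lemma hx_ext' f g : poly_fun f -> poly_fun g -> (forall U, unitary U -> f U = g U) ->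
  haar f = haar g.
Proof. exact: hx_ext. Qed.

Lemma first_moment : haar (q (e i0)) = d%:R^-1.
Proof.
have h1 : \sum_(l < d) haar (q (e l)) = 1.
  rewrite -(hx_sum Hh) => [|l]; last exact: pf_q.
  rewrite -(hx_one Hh); apply: hx_ext' => [||U hU]; last exact: sum_q_delta.
    by apply: pf_sum => l; apply: pf_q.
  exact: pf_const.
rewrite (eq_bigr (fun _ => haar (q (e i0)))) in h1; last by move=> l _; exact: inv_q1 (unit_e l).
move: h1; rewrite sumr_const card_ord => h; rewrite -mulr_natr in h.
have dn0 : (d%:R : C) != 0.
  apply/eqP => h0; move: h; rewrite h0 mulr0 => /eqP; by rewrite eq_sym oner_eq0.
by apply: (mulIf dn0); rewrite h mulVf.
Qed.

Definition Dz (m : 'I_d) (z : C) : M := diag_mx (\row_j (if j == m then z else 1)).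

Lemma ue_D m z U j : ue (Dz m z *m U) j = (if j == m then z else 1) * ue U j.
Proof. by rewrite /Part3.ue -mulmxA mul_diag_mx !mxE. Qed.

Lemma unitary_D m z : z * z^* = 1 -> unitary (Dz m z).
Proof.
move=> hz; apply/matrixP => i j; rewrite mul_diag_mx !mxE.
case: (eqVneq i j) => [<-|ne]; first by case: (i == m); rewrite ?conjC1 ?mulr1.
by rewrite mulr0n conjC0 mulr0.
Qed.

Lemma idZ1 (c s X Y Xc Yc : C) :
 c ^+ 2 * (X * Xc) * (X * (-1 * Yc) + Xc * (-1 * Y)) + s ^+ 2 * (-1 * Y * (-1 * Yc)) * (X * (-1 * Yc) + Xc * (-1 * Y)) = -1 * (c ^+ 2 * (X * Xc) * (X * Yc + Xc * Y) + s ^+ 2 * (Y * Yc) * (X * Yc + Xc * Y)).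
Proof. ring. Qed.

Lemma idZ2 (i X Y Xc Yc : C) : i ^+ 2 = -1 ->
  (X * (- i * Yc)) ^+ 2 + (Xc * (i * Y)) ^+ 2 = -1 * ((X * Yc) ^+ 2 + (Xc * Y) ^+ 2).
Proof. move=> h; rewrite -h; ring. Qed.

Lemma idQ (c s X Y Xc Yc : C) :
  ((c * X + s * Y) * (c * Xc + s * Yc)) ^+ 2 =
   c ^+ 4 * (X * Xc) ^+ 2 + (s ^+ 4 * (Y * Yc) ^+ 2 +
   (4%:R * c ^+ 2 * s ^+ 2 * ((X * Xc) * (Y * Yc)) +
   (c ^+ 2 * s ^+ 2 * ((X * Yc) ^+ 2 + (Xc * Y) ^+ 2) + 2%:R * c * s *
     (c ^+ 2 * (X * Xc) * (X * Yc + Xc * Y) + s ^+ 2 * (Y * Yc) * (X * Yc + Xc * Y))))).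
Proof. ring. Qed.

Lemma idQ' (c s X Y : C) : c^* = c -> s^* = s ->
  ((c^* * X + s^* * Y) * (c^* * X + s^* * Y)^*) ^+ 2 =
   c ^+ 4 * (X * X^*) ^+ 2 + (s ^+ 4 * (Y * Y^*) ^+ 2 +
   (4%:R * c ^+ 2 * s ^+ 2 * ((X * X^*) * (Y * Y^*)) +
   (c ^+ 2 * s ^+ 2 * ((X * Y^*) ^+ 2 + (X^* * Y) ^+ 2) + 2%:R * c * s *
     (c ^+ 2 * (X * X^*) * (X * Y^* + X^* * Y) + s ^+ 2 * (Y * Y^*) * (X * Y^* + X^* * Y))))).
Proof. move=> hc hs; rewrite rmorphD !rmorphM /= !hc !hs; ring. Qed.

Lemma ic : ('i : C)^* = - 'i. Proof. by apply/eqP; rewrite eq_complex /= oppr0 !eqxx. Qed.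

Lemma dtDl (a b c : V) : dt (a + b) c = dt a c + dt b c.
Proof.
rewrite !dtE -big_split; apply: eq_bigr => k _.
by rewrite !mxE rmorphD /= mulrDl.
Qed.

Lemma dtDr (a b c : V) : dt c (a + b) = dt c a + dt c b.
Proof. by rewrite dtC dtDl rmorphD /= -!dtC. Qed.

Lemma ip_add w1 w2 U : ip (w1 + w2) U = ip w1 U + ip w2 U.
Proof. by rewrite /Part3.ip -big_split; apply: eq_bigr => l _; rewrite mxE rmorphD mulrDl. Qed.

Lemma conj35 (k : nat) : ((k%:R / 5%:R) : C)^* = k%:R / 5%:R.
Proof. by rewrite fmorph_div /= !conjC_nat. Qed.

Lemma second_pair l m : l != m ->
  haar (fun U => q (e l) U * q (e m) U) = haar (fun U => q (e i0) U ^+ 2) / 2.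
Proof.
move=> lm.
set a := haar (fun U => q (e i0) U ^+ 2).
set b := haar (fun U => q (e l) U * q (e m) U).
pose c : C := 3%:R / 5%:R. pose s : C := 4%:R / 5%:R.
pose w : V := c *: e l + s *: e m.
have uw : unit_vec w.
  rewrite /unit_vec -/(dt _ _) /w !dtDl !dtDr !dtZl !dtZr !dt_delta /e !mxE !eqxx.
  rewrite (negbTE lm) eq_sym (negbTE lm) /= /c /s !conj35.
  by field.
pose x U := ue U l. pose y U := ue U m.
pose Z1 U := c ^+ 2 * (x U * (x U)^*) * (x U * (y U)^* + (x U)^* * y U)
           + s ^+ 2 * (y U * (y U)^*) * (x U * (y U)^* + (x U)^* * y U).
pose Z2 U := (x U * (y U)^*) ^+ 2 + ((x U)^* * y U) ^+ 2.
have qe : forall k U, q (e k) U = ue U k * (ue U k)^*.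
  by move=> k U; rewrite /Part3.q ip_delta.
have pfx : poly_fun x by apply: pf_ue.
have pfy : poly_fun y by apply: pf_ue.
have pfxc : poly_fun (fun U => (x U)^*) by apply: pf_conj.
have pfyc : poly_fun (fun U => (y U)^*) by apply: pf_conj.
have pfZ1 : poly_fun Z1.
  by repeat first [apply: pf_add | apply: pf_mul | apply: pf_const | apply: pf_exp]; auto.
have pfZ2 : poly_fun Z2.
  by repeat first [apply: pf_add | apply: pf_mul | apply: pf_const | apply: pf_exp]; auto.
have hZ1 : haar Z1 = 0.
  apply: (hx_phase0 Hh (V := Dz m (-1)) (lam := -1)) => //.
  - by apply: unitary_D; rewrite rmorphN1 mulrNN mulr1.
  - by rewrite eq_sym -subr_eq0 opprK -mulr2n pnatr_eq0.
  move=> U; rewrite /Z1 /x /y !ue_D eqxx (negbTE lm) !mul1r.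
  rewrite !rmorphM /= rmorphN1.
  exact: idZ1.
have hZ2 : haar Z2 = 0.
  apply: (hx_phase0 Hh (V := Dz m 'i) (lam := -1)) => //.
  - by apply: unitary_D; rewrite ic mulrN -expr2 sqr_i opprK.
  - by rewrite eq_sym -subr_eq0 opprK -mulr2n pnatr_eq0.
  move=> U; rewrite /Z2 /x /y !ue_D eqxx (negbTE lm) !mul1r.
  rewrite !rmorphM /= ic; apply: idZ2; exact: sqr_i.
have qwE : forall U, q w U ^+ 2 =
   c ^+ 4 * q (e l) U ^+ 2 + (s ^+ 4 * q (e m) U ^+ 2 +
   (4%:R * c ^+ 2 * s ^+ 2 * (q (e l) U * q (e m) U) +
   (c ^+ 2 * s ^+ 2 * Z2 U + 2%:R * c * s * Z1 U))).
  have cc : c^* = c by rewrite /c conj35.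
  have ss : s^* = s by rewrite /s conj35.
  move=> U; rewrite !qe /Part3.q ip_add !ip_scale !ip_delta /Z1 /Z2 /x /y.
  exact: idQ' cc ss.
have pql : forall k n, poly_fun (fun U => q (e k) U ^+ n) by move=> k n; apply: pf_qn.
have pqlm : poly_fun (fun U => q (e l) U * q (e m) U) by apply: pf_mul; apply: pf_q.
have H : a = c ^+ 4 * a + s ^+ 4 * a + 4%:R * c ^+ 2 * s ^+ 2 * b.
  transitivity (haar (fun U => q w U ^+ 2)); first by rewrite inv_qn.
  rewrite (functional_extensionality _ _ qwE).
  have pfs : forall (k : C) f, poly_fun f -> poly_fun (fun U => k * f U) by move=> k f; apply: pf_scale.
  rewrite !(hx_add Hh) ?(hx_scale Hh) //; try by repeat first [apply: pfZ1 | apply: pfZ2 | apply: pql | apply: pqlm | apply: pf_add | apply: pfs].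
  rewrite hZ1 hZ2 !mulr0 !addr0 (inv_qn 2 (unit_e l)) (inv_qn 2 (unit_e m)) -/a -/b.
  by rewrite addrA.
have n0 : (576%:R / 625%:R : C) != 0 by rewrite mulf_neq0 // ?invr_eq0 pnatr_eq0.
apply: (mulfI n0).
transitivity ((c ^+ 4 * a + s ^+ 4 * a + 4%:R * c ^+ 2 * s ^+ 2 * b) - a + 576%:R/625%:R * (a / 2)).
  by rewrite /c /s; field.
by rewrite -H subrr add0r.
Qed.

Lemma second_moment : (0 < d)%N ->
  haar (fun U => q (e i0) U ^+ 2) = 2%:R / (d%:R * (d%:R + 1)).
Proof.
move=> d0.
set a := haar (fun U => q (e i0) U ^+ 2).
have pq2 : forall l m, poly_fun (fun U => q (e l) U * q (e m) U).
  by move=> l m; apply: pf_mul; apply: pf_q.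
have h : \sum_(l < d) \sum_(m < d) haar (fun U => q (e l) U * q (e m) U) = 1.
  transitivity (\sum_(l < d) haar (fun U => \sum_(m < d) q (e l) U * q (e m) U)).
    by apply: eq_bigr => l _; rewrite (hx_sum Hh).
  have pfi : forall l, poly_fun (fun U => \sum_(m < d) q (e l) U * q (e m) U).
    by move=> l; apply: (@pf_sum _ _ _ _ _ (fun m U => q (e l) U * q (e m) U)).
  rewrite -(hx_sum Hh) //.
  rewrite -(hx_one Hh); apply: hx_ext' => [||U hU]; last first.
  - transitivity ((\sum_(l < d) q (e l) U) * (\sum_(m < d) q (e m) U)).
      by rewrite mulr_suml; apply: eq_bigr => l _; rewrite mulr_sumr.
    by rewrite sum_q_delta // mulr1.
  - exact: pf_const.
  - exact: (@pf_sum _ _ _ _ _ (fun l U => \sum_(m < d) q (e l) U * q (e m) U)).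
have inner : forall l, \sum_(m < d) haar (fun U => q (e l) U * q (e m) U)
    = a + (d%:R * (a / 2) - a / 2).
  move=> l; rewrite (bigD1 l) //=.
  have -> : haar (fun U => q (e l) U * q (e l) U) = a.
    transitivity (haar (fun U => q (e l) U ^+ 2)); last exact: inv_qn 2 (unit_e l).
    by congr haar.
  apply: (congr1 (fun x => a + x)).
  rewrite (eq_bigr (fun _ => a / 2)); last first.
    by move=> m hm; rewrite second_pair // eq_sym.
  have : \sum_(m < d) (a / 2) = a / 2 + \sum_(m < d | m != l) (a / 2) by rewrite (bigD1 l).
  rewrite sumr_const card_ord mulr_natl => ->; ring.
rewrite (eq_bigr (fun _ => a + (d%:R * (a / 2) - a / 2))) in h; last by move=> l _; exact: inner.
rewrite sumr_const card_ord in h.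
have h' : d%:R * (a + (d%:R * (a / 2) - a / 2)) = 1 by rewrite mulr_natl.
have d1 : (d%:R * (d%:R + 1) : C) != 0.
  by rewrite mulf_neq0 // ?natr1 ?pnatr_eq0 // -lt0n.
apply: (mulfI d1); rewrite [RHS]mulrC divfK //.
transitivity (2%:R * (d%:R * (a + (d%:R * (a / 2) - a / 2))) : C); first by field.
by rewrite h' mulr1.
Qed.

End Mom.


Section Bihom.
Variables (R : realType) (d : nat).
Local Notation C := R[i].
Local Notation M := 'M[C]_d.
Local Notation P := ('I_d * 'I_d)%type.

Definition Gk (g : P -> P -> C) (U : M) :=
  \sum_(pq : P * P) g pq.1 pq.2 * U pq.1.1 pq.1.2 * (U pq.2.1 pq.2.2)^*.

Lemma bihom_prod (t : nat) (g : 'I_t -> P -> P -> C) :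
  bihom_poly_fun t (fun U : M => \prod_(k < t) Gk (g k) U).
Proof.
exists [ffun x : {ffun 'I_t -> P} * {ffun 'I_t -> P} => \prod_(k < t) g k (x.1 k) (x.2 k)].
move=> U _; rewrite /Gk bigA_distr_bigA /=.
pose h := fun x : {ffun 'I_t -> P} * {ffun 'I_t -> P} => [ffun k => (x.1 k, x.2 k)].
pose h' := fun f : {ffun 'I_t -> P * P} => ([ffun k => (f k).1], [ffun k => (f k).2]).
rewrite (reindex h); last first.
  exists h' => [[x1 x2] _|f _].
    by rewrite /h /h'; congr (_, _); apply/ffunP => k; rewrite !ffunE.
  by apply/ffunP => k; rewrite /h /h' !ffunE; case: (f k).
apply: eq_bigr => x _; rewrite ffunE -!big_split /=.
by apply: eq_bigr => k _; rewrite /h ffunE /=.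
Qed.

Lemma pf_prod (T : Type) (r : seq T) (F : T -> M -> C) :
  (forall x, poly_fun (F x)) -> poly_fun (fun U => \prod_(x <- r) F x U).
Proof.
move=> hF; elim: r => [|x r IH].
  by apply: (pf_ext _ (@pf_const R d 1)) => U _; rewrite big_nil.
by apply: (pf_ext _ (pf_mul (hF x) IH)) => U _; rewrite big_cons.
Qed.

Lemma pf_Gk g : poly_fun (Gk g).
Proof.
apply: pf_sum => pq; apply: pf_mul; last exact: pf_centry.
by apply: pf_mul; [apply: pf_const | apply: pf_entry].
Qed.

End Bihom.

Section Eval.
Variables (R : realType) (d : nat).
Local Notation C := R[i].
Local Notation M := 'M[C]_d.
Local Notation P := ('I_d * 'I_d)%type.
Variables (alpha beta : 'cV[C]_d).

Definition gA (p r : P) : C := (alpha p.1 0)^* * beta p.2 0 * (alpha r.1 0 * (beta r.2 0)^*).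
Definition gS (p r : P) : C := (p == r)%:R / d%:R.

Lemma ipP U : ip beta alpha U = \sum_(p : P) (alpha p.1 0)^* * beta p.2 0 * U p.1 p.2.
Proof.
rewrite /ip -(pair_bigA _ (fun (i j : 'I_d) => (alpha i 0)^* * beta j 0 * U i j)) /=.
apply: eq_bigr => l _.
rewrite /ue mxE mulr_sumr; apply: eq_bigr => m _.
by rewrite [U l m * _]mulrC mulrA.
Qed.

Lemma idABUV (A B X Y : C) : A * B * X * Y = A * X * (B * Y).
Proof. ring. Qed.

Lemma GA U : Gk gA U = q beta alpha U.
Proof.
rewrite /q ipP conj_sum mulr_suml /Gk.
rewrite -(pair_bigA _ (fun p r : P => gA p r * U p.1 p.2 * (U r.1 r.2)^*)) /=.
apply: eq_bigr => p _.
rewrite mulr_sumr; apply: eq_bigr => r _.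
rewrite !rmorphM /= conjCK /gA; exact: idABUV.
Qed.

Lemma GS U : (0 < d)%N -> unitary U -> Gk gS U = 1.
Proof.
move=> d0 hU.
have dn0 : (d%:R : C) != 0 by rewrite pnatr_eq0 -lt0n.
rewrite /Gk -(pair_bigA _ (fun p r : P => gS p r * U p.1 p.2 * (U r.1 r.2)^*)) /=.
rewrite (eq_bigr (fun p => d%:R^-1 * (U p.1 p.2 * (U p.1 p.2)^*))); last first.
  move=> p _; rewrite (bigD1 p) //= big1 ?addr0; first by rewrite /gS eqxx mul1r mulrA.
  by move=> r hr; rewrite /gS eq_sym (negbTE hr) mul0r !mul0r.
rewrite -mulr_sumr -(pair_bigA _ (fun i j : 'I_d => U i j * (U i j)^*)) /=.
rewrite (eq_bigr (fun _ => 1)); last first.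
  move=> i _; transitivity ((U *m adjmx U) i i); last by rewrite hU mxE eqxx.
  by rewrite mxE; apply: eq_bigr => j _; rewrite !mxE.
by rewrite sumr_const card_ord -mulr_natr mul1r mulVf.
Qed.

Lemma Fn_eval (t n : nat) U : (n <= t)%N -> (0 < d)%N -> unitary U ->
  \prod_(k < t) Gk (if (k < n)%N then gA else gS) U = q beta alpha U ^+ n.
Proof.
move=> nt d0 hU.
rewrite (eq_bigr (fun k : 'I_t => if (k < n)%N then q beta alpha U else 1)); last first.
  by move=> k _; case: ifP => _; rewrite ?GA ?GS.
rewrite -big_mkcond /= -(big_ord_widen _ (fun _ => q beta alpha U) nt).
by rewrite prodr_const card_ord.
Qed.

End Eval.


Section PZ.
Variable R : realType.

Lemma pz (I : finType) (p x : I -> R) (eps gamma D : R) :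
  1 <= D -> (forall i, 0 <= p i) -> \sum_i p i = 1 ->
  0 <= eps -> eps < 1 -> 0 <= gamma -> gamma <= 1 - eps ->
  (1 - eps) / D <= \sum_i p i * x i ->
  \sum_i p i * x i ^+ 2 <= (1 + eps) * (2 / (D * (D + 1))) ->
  (1 - eps - gamma) ^+ 2 / (2 * (1 + eps)) <= \sum_(i | gamma / D < x i) p i.
Proof.
move=> D1 p0 p1 e0 e1 g0 g1 hE1 hE2.
set Pr := \sum_(i | _) p i.
have Pr0 : 0 <= Pr by apply: sumr_ge0.
have D0 : 0 < D by lra.
set del := 1 - eps - gamma.
have del0 : 0 <= del by rewrite /del; lra.
have [dz|dpos] := eqVneq del 0.
  by rewrite dz expr0n /= mul0r.
have dpos' : 0 < del by rewrite lt_def dpos del0.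
set Mb := 2 * (1 + eps) / D ^+ 2.
have Mb0 : 0 < Mb by rewrite /Mb; apply: divr_gt0; [lra | apply: exprn_gt0].
have hE2' : \sum_i p i * x i ^+ 2 <= Mb.
  apply: (le_trans hE2).
  have q1 : 0 < D * (D + 1) by nra.
  have q2 : 0 < D ^+ 2 by nra.
  have k : (D * (D + 1))^-1 <= (D ^+ 2)^-1 by rewrite lef_pV2 ?posrE //; nra.
  have -> : Mb = (1 + eps) * (2 * (D ^+ 2)^-1) by rewrite /Mb; ring.
  apply: ler_wpM2l; first lra.
  by apply: ler_wpM2l; first lra.
set dl := del / D.
have dl0 : 0 < dl by apply: divr_gt0.
set mu := Mb / dl.
have mu0 : 0 < mu by apply: divr_gt0.
have mudl : mu * dl = Mb by rewrite /mu divfK // gt_eqF.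
set nu := (2 * mu)^-1.
have nu0 : 0 < nu by rewrite invr_gt0; lra.
have numu : 2 * mu * nu = 1 by rewrite /nu mulfV // gt_eqF //; lra.
have pw : forall i, p i * x i <=
    nu * (p i * x i ^+ 2) + ((if gamma / D < x i then p i else 0) * (mu / 2) + p i * (gamma / D)).
  move=> i; have pi0 := p0 i.
  have gd0 : 0 <= gamma / D by apply: divr_ge0; lra.
  case: ifP => hc.
    have key : x i <= nu * x i ^+ 2 + mu / 2.
      have : 0 <= nu * (x i - mu) ^+ 2 by apply: mulr_ge0; [lra | apply: sqr_ge0].
      have -> : nu * (x i - mu) ^+ 2 = nu * x i ^+ 2 + mu / 2 - x i.
        rewrite /nu; field; by rewrite gt_eqF.
      lra.
    have : p i * x i <= p i * (nu * x i ^+ 2 + mu / 2) by apply: ler_wpM2l.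
    have : 0 <= p i * (gamma / D) by apply: mulr_ge0.
    move=> h1 h2; nra.
  have hx : x i <= gamma / D by rewrite leNgt hc.
  have : p i * x i <= p i * (gamma / D) by apply: ler_wpM2l.
  have : 0 <= nu * (p i * x i ^+ 2).
    by apply: mulr_ge0; [lra | apply: mulr_ge0 => //; apply: sqr_ge0].
  move=> h1 h2; rewrite mul0r add0r; lra.
have hsum : \sum_i p i * x i <= \sum_i (nu * (p i * x i ^+ 2) +
    ((if gamma / D < x i then p i else 0) * (mu / 2) + p i * (gamma / D))).
  by apply: ler_sum => i _; exact: pw.
rewrite big_split big_split /= -mulr_sumr -mulr_suml -mulr_suml -big_mkcond /= -/Pr p1 mul1r in hsum.
have A : dl <= nu * Mb + Pr * (mu / 2).
  have : nu * \sum_i p i * x i ^+ 2 <= nu * Mb by apply: ler_wpM2l => //; lra.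
  have : (1 - eps) / D - gamma / D = dl by rewrite /dl /del; field; lra.
  lra.
have numb : nu * Mb = dl / 2.
  rewrite -mudl /nu; field; by rewrite gt_eqF.
rewrite numb in A.
have B : dl <= mu * Pr by lra.
have C : dl * dl <= Mb * Pr.
  have h := ler_wpM2l (ltW dl0) B.
  rewrite -mudl; lra.
have -> : del ^+ 2 / (2 * (1 + eps)) = dl * dl / Mb.
  have Dn : D != 0 by rewrite gt_eqF.
  have En : 1 + eps != 0 by rewrite gt_eqF //; lra.
  rewrite /dl /Mb; field; by rewrite Dn En.
by rewrite ler_pdivrMr // [Pr * _]mulrC.
Qed.

End PZ.


Section Main.
Variable R : realType.
Local Notation C := R[i].

Lemma realC_sum (I : finType) (f : I -> R) : \sum_i (f i)%:C = (\sum_i f i)%:C :> C.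
Proof.
rewrite /index_enum; elim: (Finite.enum I) => [|x r IH]; first by rewrite !big_nil.
by rewrite !big_cons IH rmorphD.
Qed.

Lemma realC_mul (x y : R) : (x%:C * y%:C) = (x * y)%:C :> C.
Proof. by rewrite rmorphM. Qed.

Lemma realC_invn (n : nat) : (n%:R^-1 : C) = (n%:R^-1 : R)%:C.
Proof. by rewrite fmorphV /= rmorph_nat. Qed.

End Main.


Local Open Scope complex_scope.

Theorem lemma2 (R : realType) (d t : nat) (eps gamma : R)
    (haar : ('M[R[i]]_d -> R[i]) -> R[i])
    (I : finType) (p : I -> R) (Us : I -> 'M[R[i]]_d)
    (alpha beta : 'cV[R[i]]_d) :
  (2 <= d)%N -> (2 <= t)%N -> 0 <= eps -> eps < 1 ->
  is_haar_integral haar ->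
  approx_design haar eps t p Us ->
  unit_vec alpha -> unit_vec beta ->
  0 <= gamma -> gamma <= 1 - eps ->
  \sum_(k | (gamma / d%:R)%:C < `|braket alpha (Us k) beta| ^+ 2) p k
    >= (1 - eps - gamma) ^+ 2 / (2 * (1 + eps)).
Proof.
move=> d2 t2 e0 e1 Hh [[p0 p1 pU] Hdes] ha hb g0 g1.
have d0 : (0 < d)%N by apply: leq_trans d2.
pose i0 : 'I_d := Ordinal d0.
pose F (n : nat) := fun U : 'M[R[i]]_d =>
  \prod_(k < t) Gk (if (k < n)%N then gA alpha beta else @gS R d) U.
have Fbi : forall n, bihom_poly_fun t (F n) by move=> n; apply: bihom_prod.
have Fpf : forall n, poly_fun (F n).
  by move=> n; apply: pf_prod => k; apply: pf_Gk.
have Fev : forall n U, (n <= t)%N -> unitary U -> F n U = q beta alpha U ^+ n.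
  by move=> n U nt hU; apply: Fn_eval.
have qge0 : forall U, 0 <= q beta alpha U by move=> U; apply: mul_conjC_ge0.
have Fge0 : forall n, (n <= t)%N -> forall U, unitary U -> 0 <= F n U.
  by move=> n nt U hU; rewrite Fev // exprn_ge0.
have Fhaar : forall n, (n <= t)%N -> haar (F n) = haar (fun U => q beta (e R i0) U ^+ n).
  move=> n nt; rewrite -(inv_qn Hh beta i0 n ha); apply: hx_ext => //.
    exact: pf_qn.
  by move=> U hU; rewrite Fev.
have h1 : haar (F 1%N) = d%:R^-1.
  by rewrite Fhaar ?(leq_trans _ t2) // -(first_moment Hh hb i0).
have h2 : haar (F 2%N) = 2%:R / (d%:R * (d%:R + 1)).
  by rewrite Fhaar // (second_moment Hh hb i0 d0).
pose z k := braket alpha (Us k) beta.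
pose xr k := (complex.Re (z k)) ^+ 2 + (complex.Im (z k)) ^+ 2.
have hx : forall k, (xr k)%:C = q beta alpha (Us k).
  by move=> k; rewrite /xr add_Re2_Im2 sqr_normc /Part3.q ipE.
have hxn : forall k, `|braket alpha (Us k) beta| ^+ 2 = (xr k)%:C.
  by move=> k; rewrite /xr add_Re2_Im2.
have := Hdes _ (Fbi 1%N) (Fge0 _ (leq_trans (isT : (1 <= 2)%N) t2)) => /andP [l1 _].
have := Hdes _ (Fbi 2%N) (Fge0 _ t2) => /andP [_ l2].
rewrite h1 (eq_bigr (fun i => (p i * xr i)%:C)) in l1; last first.
  by move=> i _; rewrite Fev ?(leq_trans _ t2) // ?expr1 -hx realC_mul.
rewrite h2 (eq_bigr (fun i => (p i * xr i ^+ 2)%:C)) in l2; last first.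
  by move=> i _; rewrite Fev // -hx -rmorphXn /= realC_mul.
rewrite realC_sum realC_invn realC_mul lecR in l1.
rewrite realC_sum (_ : (2%:R / (d%:R * (d%:R + 1)) : R[i]) = (2%:R / (d%:R * (d%:R + 1)))%:C) in l2; last first.
  by rewrite fmorph_div rmorphM !rmorphD !rmorph1 !rmorph_nat.
rewrite realC_mul lecR in l2.
rewrite (eq_bigl (fun k => gamma / d%:R < xr k)); last first.
  by move=> k; rewrite hxn ltcR.
apply: (pz (x := xr)) => //.
by rewrite ler1n.
Qed.
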